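(* For a positive integer $X$, let $N_X$ denote the number of distinct orbits $o(\mathbf{x})$, $\mathbf{x}\in\mathbb{Z}^2$, with $\operatorname{length}(o(\mathbf{x}))=X$. Then $N_X=0$ if $4\nmid X$, and $$N_X=\Big\lfloor\frac X6\Big\rfloor-\Big\lceil\frac X{12}\Big\rceil+1\quad\text{if } 4\mid X.$$
   Context: Define $\mathcal K_1(x_1,x_2)=(-x_1+x_2,x_2)$ and $\mathcal K_2(x_1,x_2)=(x_1,x_1-x_2)$ on $\mathbb{Z}^2$. The orbit $o(\mathbf{x})$ is the set of points obtained from $\mathbf{x}$ by repeated application of $\mathcal K_1,\mathcal K_2$: $(x_1,x_2)$, $(-x_1+x_2,x_2)$, $(-x_1+x_2,-x_1)$, $(-x_2,-x_1)$, $(-x_2,x_1-x_2)$, $(x_1,x_1-x_2)$. Orbits partition $\mathbb{Z}^2$. The length of the orbit is the Euclidean length of the closed path through the six points in the listed order: $$\operatorname{length}(o(\mathbf{x}))=2\big(|2x_1-x_2|+|x_1+x_2|+|2x_2-x_1|\big).$$ *)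

(* Defs.v *)
From Stdlib Require Import ZArith List.
Open Scope Z_scope.

Definition K1 (p : Z * Z) : Z * Z := (- fst p + snd p, snd p).
Definition K2 (p : Z * Z) : Z * Z := (fst p, fst p - snd p).

Inductive in_orbit (x : Z * Z) : Z * Z -> Prop :=
| orb_refl : in_orbit x x
| orb_K1 y : in_orbit x y -> in_orbit x (K1 y)
| orb_K2 y : in_orbit x y -> in_orbit x (K2 y).

Definition orbit (x : Z * Z) : Z * Z -> Prop := in_orbit x.

Definition same_orbit (a b : Z * Z) : Prop :=
  forall y, orbit a y <-> orbit b y.

Definition orbit_length (x : Z * Z) : Z :=
  2 * (Z.abs (2 * fst x - snd x) + Z.abs (fst x + snd x) + Z.abs (2 * snd x - fst x)).

Definition num_orbits (X : Z) (n : nat) : Prop :=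
  exists s : list (Z * Z),
    length s = n /\ NoDup s /\
    (forall a, In a s -> orbit_length a = X) /\
    (forall a b, In a s -> In b s -> same_orbit a b -> a = b) /\
    (forall x, orbit_length x = X -> exists a, In a s /\ same_orbit x a).

(* Main.v *)
Require Import Defs.
From Stdlib Require Import ZArith List Lia FinFun.
Open Scope Z_scope.

Lemma pair_eq (a b c d : Z) : a = c -> b = d -> (a, b) = (c, d).
Proof. intros; subst; reflexivity. Qed.

Lemma K1K1 p : K1 (K1 p) = p.
Proof. destruct p; unfold K1; simpl; apply pair_eq; lia. Qed.
Lemma K2K2 p : K2 (K2 p) = p.
Proof. destruct p; unfold K2; simpl; apply pair_eq; lia. Qed.

Lemma orb_trans x y z : in_orbit x y -> in_orbit y z -> in_orbit x z.
Proof. intros H1 H2; induction H2; [exact H1| apply orb_K1 | apply orb_K2]; auto. Qed.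

Lemma orb_sym x y : in_orbit x y -> in_orbit y x.
Proof.
  induction 1. constructor.
  - apply orb_trans with y; auto. pattern y at 2; rewrite <- (K1K1 y).
    apply orb_K1; constructor.
  - apply orb_trans with y; auto. pattern y at 2; rewrite <- (K2K2 y).
    apply orb_K2; constructor.
Qed.

Lemma in_same x a : in_orbit x a -> same_orbit x a.
Proof.
  intros H y; unfold orbit; split; intro H'.
  - apply orb_trans with x; auto. apply orb_sym; auto.
  - apply orb_trans with a; auto.
Qed.

Definition six (p : Z * Z) : list (Z * Z) :=
  let (x1, x2) := p in
  (x1,x2) :: (-x1+x2,x2) :: (-x1+x2,-x1) :: (-x2,-x1) :: (-x2,x1-x2) :: (x1,x1-x2) :: nil.

Ltac pick := first [ left; apply pair_eq; lia | right; pick ].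

Lemma orb_six x y : in_orbit x y -> In y (six x).
Proof.
  induction 1.
  - destruct x; simpl; auto.
  - destruct x as [x1 x2]; simpl in IHin_orbit.
    destruct IHin_orbit as [<-|[<-|[<-|[<-|[<-|[<-|[]]]]]]]; unfold K1; simpl; pick.
  - destruct x as [x1 x2]; simpl in IHin_orbit.
    destruct IHin_orbit as [<-|[<-|[<-|[<-|[<-|[<-|[]]]]]]]; unfold K2; simpl; pick.
Qed.

Lemma orb_eq x y z : in_orbit x y -> y = z -> in_orbit x z.
Proof. intros; subst; auto. Qed.

Lemma six_orb x1 x2 q : In q (six (x1, x2)) -> in_orbit (x1, x2) q.
Proof.
  assert (H1 : in_orbit (x1,x2) (-x1+x2,x2)) by (apply (orb_K1 _ (x1,x2)); constructor).
  assert (H2 : in_orbit (x1,x2) (-x1+x2,-x1)).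
  { eapply orb_eq. apply (orb_K2 _ _ H1). unfold K2; simpl; apply pair_eq; lia. }
  assert (H3 : in_orbit (x1,x2) (-x2,-x1)).
  { eapply orb_eq. apply (orb_K1 _ _ H2). unfold K1; simpl; apply pair_eq; lia. }
  assert (H4 : in_orbit (x1,x2) (-x2,x1-x2)).
  { eapply orb_eq. apply (orb_K2 _ _ H3). unfold K2; simpl; apply pair_eq; lia. }
  assert (H5 : in_orbit (x1,x2) (x1,x1-x2)).
  { eapply orb_eq. apply (orb_K1 _ _ H4). unfold K1; simpl; apply pair_eq; lia. }
  simpl; intros [<-|[<-|[<-|[<-|[<-|[<-|[]]]]]]]; auto; constructor.
Qed.

Lemma len4 x : (4 | orbit_length x).
Proof.
  destruct x as [x1 x2]; unfold orbit_length; cbn [fst snd].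
  set (u := 2*x1-x2); set (w := 2*x2-x1).
  replace (x1+x2) with (u+w) by (unfold u, w; lia). clearbody u w.
  destruct (Z.le_ge_cases 0 u), (Z.le_ge_cases 0 w), (Z.le_ge_cases 0 (u+w)).
  all: first [ solve [exists (Z.abs u); lia] | solve [exists (Z.abs w); lia] | solve [exists (Z.abs (u+w)); lia] ].
Qed.

Definition good (M : Z) (q : Z * Z) : Prop :=
  snd q = 2 * fst q + M /\ -2*M <= 3 * fst q /\ 3 * fst q <= -M.

Lemma cover x1 x2 M : orbit_length (x1,x2) = 4*M -> 0 < M ->
  exists q, In q (six (x1,x2)) /\ good M q.
Proof.
  unfold orbit_length, good; cbn [fst snd]; intros H HM.
  assert (D : (x2 = 2*x1+M /\ -2*M <= 3*x1 /\ 3*x1 <= -M) \/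
              (x2 = 2*(-x1+x2)+M /\ -2*M <= 3*(-x1+x2) /\ 3*(-x1+x2) <= -M) \/
              (-x1 = 2*(-x1+x2)+M /\ -2*M <= 3*(-x1+x2) /\ 3*(-x1+x2) <= -M) \/
              (-x1 = 2*(-x2)+M /\ -2*M <= 3*(-x2) /\ 3*(-x2) <= -M) \/
              (x1-x2 = 2*(-x2)+M /\ -2*M <= 3*(-x2) /\ 3*(-x2) <= -M) \/
              (x1-x2 = 2*x1+M /\ -2*M <= 3*x1 /\ 3*x1 <= -M)) by lia.
  destruct D as [D|[D|[D|[D|[D|D]]]]];
    [exists (x1,x2) | exists (-x1+x2,x2) | exists (-x1+x2,-x1) | exists (-x2,-x1)
    | exists (-x2,x1-x2) | exists (x1,x1-x2)];
    (split; [cbn [six In]; tauto | cbn [fst snd]; exact D]).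
Qed.

Ltac divs M :=
  pose proof (Z.div_mod (2*M) 3 ltac:(lia)); pose proof (Z.mod_pos_bound (2*M) 3 ltac:(lia));
  pose proof (Z.div_mod (M+2) 3 ltac:(lia)); pose proof (Z.mod_pos_bound (M+2) 3 ltac:(lia)).

Definition lo (M : Z) := - (2*M/3).
Definition rep (M : Z) (i : nat) : Z * Z := (lo M + Z.of_nat i, 2*(lo M + Z.of_nat i) + M).
Definition reps (M : Z) := map (rep M) (seq 0 (Z.to_nat (2*M/3 - (M+2)/3 + 1))).

Lemma in_reps M q : 0 < M -> (In q (reps M) <-> good M q).
Proof.
  intros HM; unfold reps, good; rewrite in_map_iff; split.
  - intros [i [<- Hi]]; apply in_seq in Hi; unfold rep, lo; cbn [fst snd].
    destruct Hi as [_ Hi]. divs M.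
    assert (0 <= 2*M/3 - (M+2)/3 + 1) by lia.
    apply Nat2Z.inj_lt in Hi. rewrite Nat2Z.inj_add, Z2Nat.id in Hi by lia.
    lia.
  - destruct q as [c d]; cbn [fst snd]; intros (-> & H1 & H2).
    divs M. exists (Z.to_nat (c - lo M)); split.
    + unfold rep; rewrite Z2Nat.id by (unfold lo; lia). apply pair_eq; lia.
    + apply in_seq; unfold lo; split; [lia|].
      apply Nat2Z.inj_lt. rewrite Nat2Z.inj_add, !Z2Nat.id by lia. lia.
Qed.

Theorem mainTheorem16 (X : Z) (hX : 0 < X) :
  (~ (4 | X) -> num_orbits X 0%nat) /\
  ((4 | X) -> num_orbits X (Z.to_nat (X / 6 - (X + 11) / 12 + 1))).
Proof.
  split.
  - intros H4. exists nil; repeat split; try constructor; try (simpl; tauto).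
    intros x Hx; exfalso; apply H4; rewrite <- Hx; apply len4.
  - intros [M HM]. assert (HM0 : 0 < M) by lia.
    replace (X / 6 - (X + 11) / 12 + 1) with (2*M/3 - (M+2)/3 + 1) by (subst; divs M;
      pose proof (Z.div_mod (M*4) 6 ltac:(lia)); pose proof (Z.mod_pos_bound (M*4) 6 ltac:(lia));
      pose proof (Z.div_mod (M*4+11) 12 ltac:(lia)); pose proof (Z.mod_pos_bound (M*4+11) 12 ltac:(lia));
      lia).
    exists (reps M); repeat split.
    + unfold reps; rewrite length_map, length_seq; reflexivity.
    + unfold reps; apply FinFun.Injective_map_NoDup; [|apply seq_NoDup].
      intros i j Hij; unfold rep in Hij; injection Hij; lia.
    + intros [c d] Ha; apply in_reps in Ha; auto; unfold good, orbit_length in *; cbn [fst snd] in *; lia.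
    + intros a b Ha Hb Hs. apply in_reps in Ha; apply in_reps in Hb; auto.
      assert (Hab : in_orbit a b) by (apply (proj2 (Hs b)); constructor).
      apply orb_six in Hab. destruct a as [a1 a2], b as [b1 b2].
      unfold good in *; cbn [fst snd six In] in *.
      destruct Hab as [E|[E|[E|[E|[E|[E|[]]]]]]]; injection E; intros; apply pair_eq; lia.
    + intros [x1 x2] Hx. subst X.
      destruct (cover x1 x2 M) as [q [Hq Hg]]; auto; try lia.
      exists q; split. apply in_reps; auto.
      apply in_same, six_orb; auto.
Qed.
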